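(* Let $m>0$, $n$ an odd positive integer, $V=[-m/2,m/2]$. For every $D\in\mathcal{CTM}$ and every $j\in\{-\lceil n/2\rceil+1,\dots,0,\dots,n-\lceil n/2\rceil\}$, $$|x_{\lceil n/2\rceil}-x_{\lceil n/2\rceil+j}|\le |j|\cdot\frac{m}{\lceil n/2\rceil-1}.$$
   Context: A dataset is $D=(x_1,\dots,x_n)\in V^n$, indexed so that $x_1\le\dots\le x_n$. $\mathcal{CTM}$ is the set of datasets with $|x_{i+1}-x_i|\ge|x_{j+1}-x_j|$ for all $1\le i<j\le\lceil n/2\rceil-1$ and $|x_i-x_{i-1}|\ge|x_j-x_{j-1}|$ for all $\lceil n/2\rceil+1\le j<i\le n$. *)

(* Defs.v *)
From mathcomp Require Import all_boot all_order all_algebra.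
Set Implicit Arguments. Unset Strict Implicit. Unset Printing Implicit Defensive.
Import Order.TTheory GRing.Theory Num.Theory.
Local Open Scope ring_scope.

(* A dataset D = (x_1,...,x_n) is represented by x : nat -> R, 1-based:
   only the values x 1, ..., x n matter. *)

Definition ceilhalf (n : nat) : nat := uphalf n.

Definition in_V (R : realFieldType) (m : R) (n : nat) (x : nat -> R) : Prop :=
  forall i : nat, (1 <= i <= n)%N -> - (m / 2) <= x i <= m / 2.

Definition sorted_ds (R : realFieldType) (n : nat) (x : nat -> R) : Prop :=
  forall i : nat, (1 <= i < n)%N -> x i <= x i.+1.

Definition CTM (R : realFieldType) (n : nat) (x : nat -> R) : Prop :=
  (forall i j : nat, (1 <= i)%N -> (i < j)%N -> (j <= (ceilhalf n).-1)%N ->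
     `|x j.+1 - x j| <= `|x i.+1 - x i|) /\
  (forall i j : nat, ((ceilhalf n).+1 <= j)%N -> (j < i)%N -> (i <= n)%N ->
     `|x j - x j.-1| <= `|x i - x i.-1|).

(* Main.v *)
Require Import Defs.
From mathcomp Require Import all_boot all_order all_algebra.
From mathcomp Require Import zify lra.
Import Order.TTheory GRing.Theory Num.Theory.
Local Open Scope ring_scope.

Lemma cross (R : realFieldType) (g : nat -> R) (a b c : nat) :
  (a <= b <= c)%N ->
  (forall i l, (a <= i < b)%N -> (b <= l < c)%N -> g i <= g l) ->
  (c - b)%:R * \sum_(a <= i < b) g i <= (b - a)%:R * \sum_(b <= l < c) g l.
Proof.
move=> _ H.
rewrite !mulr_sumr.
have -> : \sum_(a <= i < b) (c - b)%:R * g i = \sum_(a <= i < b) \sum_(b <= l < c) g i.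
  by apply: eq_big_nat => i _; rewrite sumr_const_nat mulr_natl.
have -> : \sum_(b <= l < c) (b - a)%:R * g l = \sum_(b <= l < c) \sum_(a <= i < b) g l.
  by apply: eq_big_nat => i _; rewrite sumr_const_nat mulr_natl.
rewrite [X in _ <= X]exchange_big_nat.
apply: ler_sum_nat => i Hi; apply: ler_sum_nat => l Hl; exact: H.
Qed.

Lemma cross2 (R : realFieldType) (g : nat -> R) (a b c : nat) :
  (a <= b <= c)%N ->
  (forall i l, (a <= i < b)%N -> (b <= l < c)%N -> g l <= g i) ->
  (b - a)%:R * \sum_(b <= l < c) g l <= (c - b)%:R * \sum_(a <= i < b) g i.
Proof.
move=> Hab H.
have := @cross R (fun i => - g i) a b c Hab.
rewrite !sumrN !mulrN lerN2; apply=> i l Hi Hl; rewrite lerN2; exact: H.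
Qed.

Lemma finish (R : realFieldType) (m S T : R) (N k : nat) :
  (0 < N)%N -> (k <= N)%N -> 0 <= S -> S + T <= m ->
  (N - k)%:R * S <= k%:R * T ->
  `|S| <= k%:R * (m / N%:R).
Proof.
move=> HN Hk HS HST H.
rewrite ger0_norm // mulrA ler_pdivlMr; last by rewrite ltr0n.
have HN' : (N%:R : R) = (N - k)%:R + k%:R by rewrite -natrD subnK.
have hk : (0 : R) <= k%:R by rewrite ler0n.
rewrite mulrC HN'.
nra.
Qed.

Theorem lemma7p11 (R : realFieldType) (m : R) (n : nat) (x : nat -> R)
  (hm : 0 < m) (hn : odd n) (hVn : in_V m n x) (hsort : sorted_ds n x)
  (hD : CTM n x) (j : int)
  (hj1 : - ((ceilhalf n)%:Z) + 1 <= j) (hj2 : j <= (n%:Z) - (ceilhalf n)%:Z) :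
  `|x (ceilhalf n) - x (absz ((ceilhalf n)%:Z + j))|
    <= (absz j)%:R * (m / ((ceilhalf n).-1)%:R).
Proof.
case: hD => hL hR.
have Hc : ceilhalf n = (n./2).+1 by rewrite /ceilhalf uphalf_half hn.
have Hn : n = (n./2).*2.+1 by rewrite -[n in LHS]odd_double_half hn.
move: hj1 hj2 hL hR hVn hsort.
rewrite Hc; rewrite [in (n%:Z)]Hn.
set h := n./2.
move: Hn => Hn.
rewrite Hn.
move=> hj1 hj2 hL hR hV hs.
have xm : forall i l, (1 <= i <= h.*2.+1)%N -> (1 <= l <= h.*2.+1)%N -> x i - x l <= m.
  move=> i l Hi Hl; have := hV i Hi; have := hV l Hl; lra.
rewrite /= in hL hR.
case: j hj1 hj2 => k hj1 hj2.
-
  have Hk : (k <= h)%N by lia.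
  have -> : absz (Posz h.+1 + Posz k) = (h.+1 + k)%N by lia.
  rewrite /=.
  case: (posnP h) => [h0|hpos].
    have -> : k = 0%N by lia. by rewrite addn0 subrr normr0 mul0r.
  have -> : `|x h.+1 - x (h.+1 + k)%N| = `|x (h.+1 + k)%N - x h.+1| by rewrite distrC.
  set g := fun i => x i.+1 - x i.
  have SA : \sum_(h.+1 <= i < h.+1 + k) g i = x (h.+1 + k)%N - x h.+1.
    by rewrite telescope_sumr //; lia.
  have SB : \sum_(h.+1 + k <= i < h.*2.+1) g i = x h.*2.+1 - x (h.+1 + k)%N.
    by rewrite telescope_sumr //; lia.
  apply: (@finish _ m _ (x h.*2.+1 - x (h.+1 + k)%N)) => //.
  + rewrite -SA big_nat; apply: sumr_ge0 => i /andP[? ?]; rewrite subr_ge0; apply: hs; lia.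
  + have := xm h.*2.+1 h.+1 ltac:(lia) ltac:(lia). lra.
  + rewrite -SA -SB.
    have := @cross R g h.+1 (h.+1 + k)%N h.*2.+1 ltac:(lia).
    have -> : (h.*2.+1 - (h.+1 + k) = h - k)%N by lia.
    have -> : (h.+1 + k - h.+1 = k)%N by lia.
    move=> Hc'; apply: Hc' => i l Hi Hl.
    have := hR l.+1 i.+1 ltac:(lia) ltac:(lia) ltac:(lia).
    rewrite /g /= !ger0_norm ?subr_ge0 //; apply: hs; lia.
- (* left side: j = Negz k = -(k+1) *)
  have Hk : (k.+2 <= h.+1)%N by lia.
  have -> : absz (Posz h.+1 + Negz k) = (h.+1 - k.+1)%N by lia.
  rewrite /=.
  set g := fun i => x i.+1 - x i.
  have SA : \sum_(h.+1 - k.+1 <= i < h.+1) g i = x h.+1 - x (h.+1 - k.+1)%N.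
    by rewrite telescope_sumr //; lia.
  have SB : \sum_(1 <= i < h.+1 - k.+1) g i = x (h.+1 - k.+1)%N - x 1%N.
    by rewrite telescope_sumr //; lia.
  apply: (@finish _ m _ (x (h.+1 - k.+1)%N - x 1%N)) => //.
  + lia.
  + rewrite -SA big_nat; apply: sumr_ge0 => i /andP[? ?]; rewrite subr_ge0; apply: hs; lia.
  + have := xm h.+1 1%N ltac:(lia) ltac:(lia). lra.
  + rewrite -SA -SB.
    have := @cross2 R g 1%N (h.+1 - k.+1)%N h.+1 ltac:(lia).
    have -> : (h.+1 - (h.+1 - k.+1) = k.+1)%N by lia.
    have -> : (h.+1 - k.+1 - 1 = h - k.+1)%N by lia.
    apply=> i l Hi Hl.
    have := hL i l ltac:(lia) ltac:(lia) ltac:(lia).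
    rewrite /g /= !ger0_norm ?subr_ge0 //; apply: hs; lia.
Qed.
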